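(* Let $(K^{(n)})_{n\ge1}$ be a consistent family of Markov kernels, $K^{(n)}$ an order-preserving Markov kernel on $\mathbb{R}^n$ for each $n$. Then for all $n\ge2$ and every bounded Borel supermodular $f:\mathbb{R}^n\to\mathbb{R}$, $K^{(n)}f$ is a bounded Borel supermodular function.
   Context: $f$ is supermodular if $f(\mathbf{x})+f(\mathbf{y})\le f(\mathbf{x}\vee\mathbf{y})+f(\mathbf{x}\wedge\mathbf{y})$ for all $\mathbf{x},\mathbf{y}$, with $\vee,\wedge$ componentwise max and min. $K^{(n)}f(\mathbf{x})=\int f(\mathbf{y})K^{(n)}(\mathbf{x},d\mathbf{y})$. A kernel $K$ on $\mathbb{R}^n$ is order-preserving if $K(\mathbf{x},\mathbb{R}^n_{\mathbf{x}})=1$ for all $\mathbf{x}$, where $\mathbb{R}^n_{\mathbf{x}}=\{\mathbf{y}:\forall i,j,\ x_i\le x_j\Rightarrow y_i\le y_j\}$. The family is consistent if $K^{(n)}(\mathbf{x},(\pi^n_{i_1,\dots,i_k})^{-1}(B))=K^{(k)}(\pi^n_{i_1,\dots,i_k}(\mathbf{x}),B)$ for all $1\le k\le n$, $i_1,\dots,i_k\in\{1,\dots,n\}$ (repetitions allowed), $\mathbf{x}\in\mathbb{R}^n$ and Borel $B\subset\mathbb{R}^k$, where $\pi^n_{i_1,\dots,i_k}(\mathbf{x})=(x_{i_1},\dots,x_{i_k})$. *)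

(* Defs.v *)
From HB Require Import structures.
From mathcomp Require Import all_boot all_order all_algebra.
From mathcomp Require Import all_classical all_reals all_analysis.
Set Implicit Arguments. Unset Strict Implicit. Unset Printing Implicit Defensive.
Import Order.TTheory GRing.Theory Num.Theory.
Import numFieldNormedType.Exports.
Local Open Scope classical_set_scope.
Local Open Scope ring_scope.

(* R^n, represented by row vectors 'rV[R]_n (with the product/matrix topology),
   equipped with its Borel sigma-algebra: the sigma-algebra generated by the
   open sets. *)
Definition Rn (R : realType) (n : nat) : measurableType _ :=
  g_sigma_algebraType [set A : set 'rV[R]_n | open A].

Definition coord (R : realType) (n : nat) (x : Rn R n) (i : 'I_n) : R :=
  (x : 'rV[R]_n) ord0 i.

Definition vmax (R : realType) (n : nat) (x y : Rn R n) : Rn R n :=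
  \row_i Num.max (coord x i) (coord y i).
Definition vmin (R : realType) (n : nat) (x y : Rn R n) : Rn R n :=
  \row_i Num.min (coord x i) (coord y i).

Definition supermodular (R : realType) (n : nat) (f : Rn R n -> R) : Prop :=
  forall x y : Rn R n, f x + f y <= f (vmax x y) + f (vmin x y).

Definition bounded_fun_R (T : Type) (R : realType) (f : T -> R) : Prop :=
  exists M : R, forall x, `|f x| <= M.

(* K f (x) = \int f(y) K(x, dy) (real-valued; finite for bounded Borel f) *)
Definition kapply (R : realType) (n : nat) (K : R.-pker (Rn R n) ~> (Rn R n))
  (f : Rn R n -> R) : Rn R n -> R :=
  fun x => Rintegral (K x) setT f.

Definition order_set (R : realType) (n : nat) (x : Rn R n) : set (Rn R n) :=
  [set y | forall i j : 'I_n, coord x i <= coord x j -> coord y i <= coord y j].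

Definition order_preserving (R : realType) (n : nat)
  (K : R.-pker (Rn R n) ~> (Rn R n)) : Prop :=
  forall x : Rn R n, K x (order_set x) = 1%E.

Definition proj (R : realType) (n k : nat) (idx : 'I_k -> 'I_n) (x : Rn R n)
  : Rn R k := \row_j coord x (idx j).

Definition consistent (R : realType) (K : forall n : nat, R.-pker (Rn R n) ~> (Rn R n))
  : Prop :=
  forall (n k : nat), (1 <= k)%N -> (k <= n)%N ->
  forall (idx : 'I_k -> 'I_n) (x : Rn R n) (B : set (Rn R k)),
    measurable B ->
    K n x (proj idx @^-1` B) = K k (proj idx x) B.

(* Main.v *)
Require Import Defs.
From HB Require Import structures.
From mathcomp Require Import all_boot all_order all_algebra.
From mathcomp Require Import all_classical all_reals all_analysis.
From mathcomp Require Import measurable_realfun.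
From mathcomp Require Import zify.
Import Order.TTheory GRing.Theory Num.Theory.
Import numFieldNormedType.Exports.
Local Open Scope classical_set_scope.
Local Open Scope ring_scope.

Section S.
Context {R : realType}.

Lemma mRn_open {n} (A : set (Rn R n)) : @open 'rV[R]_n A -> measurable A.
Proof. by move=> oA; apply: sub_sigma_algebra. Qed.

Lemma mRn_closed {n} (A : set (Rn R n)) : @closed 'rV[R]_n A -> measurable A.
Proof.
move=> cA; rewrite -[A]setCK; apply: measurableC; apply: mRn_open.
exact: closed_openC.
Qed.

Lemma proj_cont {n k} (idx : 'I_k -> 'I_n) :
  continuous (Defs.proj idx : 'rV[R]_n -> 'rV[R]_k).
Proof.
move=> u A /nbhs_ballP[e /= e0 eA].
apply/nbhs_ballP; exists e => //= v [_ uv]; apply: eA; split => // i j.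
by rewrite !mxE; exact: (uv ord0 (idx j)).
Qed.

Lemma mproj {n k} (idx : 'I_k -> 'I_n) :
  measurable_fun setT (Defs.proj idx : Rn R n -> Rn R k).
Proof.
apply: measurability; first reflexivity.
move=> _ [B oB <-]; rewrite setTI; apply: mRn_open.
by apply: open_comp => // x _; exact: proj_cont.
Qed.

Lemma coord_cont {n} i : continuous (fun y : 'rV[R]_n => Defs.coord y i).
Proof. exact: coord_continuous. Qed.

Lemma order_set_closed {n} (w : Rn R n) : measurable (Defs.order_set w).
Proof.
apply: mRn_closed.
have -> : Defs.order_set w = \bigcap_(i in setT) \bigcap_(j in setT)
   [set y : 'rV[R]_n | Defs.coord w i <= Defs.coord w j -> Defs.coord y i <= Defs.coord y j].
  apply/seteqP; split => y /= H i; first by move=> _ j _; exact: H.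
  by move=> j; exact: (H i I j I).
apply: closed_bigI => i _; apply: closed_bigI => j _.
case: (Defs.coord w i <= Defs.coord w j).
  have -> : [set y : 'rV[R]_n | true -> Defs.coord y i <= Defs.coord y j]
     = (fun y : 'rV[R]_n => Defs.coord y i - Defs.coord y j) @^-1` [set r | r <= 0].
    apply/seteqP; split => y /=; rewrite subr_le0; [by apply|by move=> ? ?].
  rewrite -openC preimage_setC; apply: open_comp.
    by move=> x _; apply: continuousB; exact: coord_cont.
  by rewrite openC; exact: closed_le.
have -> : [set y : 'rV[R]_n | false -> Defs.coord y i <= Defs.coord y j] = setT.
  by apply/seteqP; split => y.
exact: closedT.
Qed.


Lemma bounded_integrable {d} {T : measurableType d} {mu : {measure set T -> \bar R}}
  {g : T -> R} : mu setT = 1%E -> bounded_fun_R g -> measurable_fun setT g ->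
  mu.-integrable setT (EFin \o g).
Proof.
move=> mu1 [M HM] mg; apply: measurable_bounded_integrable => //.
  by rewrite mu1 ltry.
exists M; split; first exact: num_real.
by move=> r Mr x _ /=; rewrite (le_trans (HM x))// ltW.
Qed.

Lemma transfer (K : forall n : nat, R.-pker (Rn R n) ~> (Rn R n)) :
  consistent K -> forall m k, (1 <= k)%N -> (k <= m)%N ->
  forall (idx : 'I_k -> 'I_m) (z : Rn R m) (f : Rn R k -> R),
  bounded_fun_R f -> measurable_fun setT f ->
  Rintegral (K k (Defs.proj idx z)) setT f =
  Rintegral (K m z) setT (f \o Defs.proj idx).
Proof.
move=> cK m k k1 km idx z f bf mf.
have mf' : measurable_fun [set: Rn R k] (EFin \o f : Rn R k -> \bar R) by exact/measurable_EFinP.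
have intf : (K m z).-integrable (Defs.proj idx @^-1` setT) ((EFin \o f) \o Defs.proj idx).
  rewrite preimage_setT; apply: bounded_integrable.
  - exact: prob_kernel.
  - by case: bf => M HM; exists M => x; exact: HM.
  - exact: measurableT_comp mf (mproj idx).
have := integral_pushforward (mproj idx) mf' intf measurableT.
rewrite preimage_setT /Rintegral => <-.
congr fine; apply: eq_measure_integral.
  move=> mT B mB; have := @mproj m k idx mT B mB; exact.
by move=> mp B mB _; rewrite -(cK m k k1 km idx z B mB).
Qed.


Lemma kapply_bounded {n} (k : R.-pker (Rn R n) ~> (Rn R n)) (f : Rn R n -> R) :
  bounded_fun_R f -> measurable_fun setT f -> bounded_fun_R (kapply k f).
Proof.
move=> bf mf; have [M HM] := bf; exists M => x; rewrite /kapply.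
have k1 : k x setT = 1%E by exact: prob_kernel.
have i := bounded_integrable k1 bf mf.
apply: le_trans (le_normr_Rintegral measurableT i) _.
have in1 : (k x).-integrable setT (EFin \o (fun y => `|f y|)).
  apply: bounded_integrable => //; last exact: measurableT_comp.
  by exists M => y; rewrite normr_id.
have in2 : (k x).-integrable setT (EFin \o (cst M)).
  by apply: bounded_integrable => //; exists `|M| => y.
apply: le_trans (le_Rintegral measurableT in1 in2 (fun y _ => HM y)) _.
by rewrite Rintegral_cst // k1 /= mulr1.
Qed.

Lemma kapply_measurable {n} (k : R.-pker (Rn R n) ~> (Rn R n)) (f : Rn R n -> R) :
  bounded_fun_R f -> measurable_fun setT f -> measurable_fun setT (kapply k f).
Proof.
move=> bf mf.
have mf' : measurable_fun [set: Rn R n] (EFin \o f : Rn R n -> \bar R) by exact/measurable_EFinP.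
have -> : kapply k f = (fun x => fine (\int[k x]_y ((EFin \o f)^\+ y)) -
                                 fine (\int[k x]_y ((EFin \o f)^\- y))).
  apply/funext => x; rewrite /kapply /Rintegral integralE.
  have k1 : k x setT = 1%E by exact: prob_kernel.
  have i := bounded_integrable k1 bf mf.
  rewrite fineB //.
    by apply: integrable_fin_num => //; exact: integrable_funepos.
  by apply: integrable_fin_num => //; exact: integrable_funeneg.
apply: measurable_funB.
  apply: measurableT_comp; first exact: fine_measurable.
  apply: measurable_fun_integral_kernel.
  - by move=> U mU; exact: measurable_kernel.
  - by move=> y; exact: funepos_ge0.
  - exact: measurable_funepos.
apply: measurableT_comp; first exact: fine_measurable.
apply: measurable_fun_integral_kernel.
- by move=> U mU; exact: measurable_kernel.
- by move=> y; exact: funeneg_ge0.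
- exact: measurable_funeneg.
Qed.


Lemma kapply_super (K : forall n : nat, R.-pker (Rn R n) ~> (Rn R n)) :
  consistent K ->
  (forall n : nat, (1 <= n)%N -> order_preserving (K n)) ->
  forall n : nat, (1 <= n)%N ->
  forall f : Rn R n -> R,
    bounded_fun_R f -> measurable_fun setT f -> supermodular f ->
    supermodular (kapply (K n) f).
Proof.
move=> cK op n n1 f bf mf sf x y.
pose m := (n + n + (n + n))%N.
have m1 : (1 <= m)%N by rewrite /m; lia.
have nm : (n <= m)%N by rewrite /m; lia.
pose w : 'rV[R]_m := row_mx (row_mx x y) (row_mx (vmax x y) (vmin x y)).
pose i1 : 'I_n -> 'I_m := fun j => lshift (n + n) (lshift n j).
pose i2 : 'I_n -> 'I_m := fun j => lshift (n + n) (rshift n j).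
pose i3 : 'I_n -> 'I_m := fun j => rshift (n + n) (lshift n j).
pose i4 : 'I_n -> 'I_m := fun j => rshift (n + n) (rshift n j).
have hw : forall j, [/\ Defs.coord (w : Rn R m) (i1 j) = Defs.coord x j,
   Defs.coord (w : Rn R m) (i2 j) = Defs.coord y j,
   Defs.coord (w : Rn R m) (i3 j) = Num.max (Defs.coord x j) (Defs.coord y j) &
   Defs.coord (w : Rn R m) (i4 j) = Num.min (Defs.coord x j) (Defs.coord y j)].
  move=> j; rewrite /Defs.coord /w /i1 /i2 /i3 /i4 /vmax /vmin.
  by split; rewrite ?(row_mxEl, row_mxEr, mxE).
have e1 : Defs.proj i1 (w : Rn R m) = x.
  by apply/rowP => j; rewrite mxE; have [-> _ _ _] := hw j.
have e2 : Defs.proj i2 (w : Rn R m) = y.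
  by apply/rowP => j; rewrite mxE; have [_ -> _ _] := hw j.
have e3 : Defs.proj i3 (w : Rn R m) = vmax x y.
  by apply/rowP => j; rewrite mxE; have [_ _ -> _] := hw j; rewrite /vmax mxE.
have e4 : Defs.proj i4 (w : Rn R m) = vmin x y.
  by apply/rowP => j; rewrite mxE; have [_ _ _ ->] := hw j; rewrite /vmin mxE.
have T : forall i, kapply (K n) f (Defs.proj i (w : Rn R m)) =
    Rintegral (K m w) setT (f \o Defs.proj i).
  by move=> i; rewrite /kapply (transfer _ cK _ _ n1 nm i w f bf mf).
rewrite -e3 -e4 -e1 -e2 !T.
have k1 : K m w setT = 1%E by exact: prob_kernel.
have [M HM] := bf.
have bi : forall i : 'I_n -> 'I_m, bounded_fun_R (f \o Defs.proj i).
  by move=> i; exists M => v; exact: HM.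
have mi : forall i : 'I_n -> 'I_m, measurable_fun setT (f \o Defs.proj i).
  by move=> i; exact: measurableT_comp mf (mproj i).
have I : forall i : 'I_n -> 'I_m, (K m w).-integrable setT (EFin \o (f \o Defs.proj i)).
  by move=> i; exact: bounded_integrable k1 (bi i) (mi i).
rewrite -(RintegralD measurableT (I i1) (I i2)) -(RintegralD measurableT (I i3) (I i4)).
have bs : forall i i' : 'I_n -> 'I_m, bounded_fun_R (fun v => (f \o Defs.proj i) v + (f \o Defs.proj i') v).
  move=> i i'; exists (M + M) => v.
  by apply: le_trans (ler_normD _ _) _; apply: lerD; exact: HM.
have ms : forall i i' : 'I_n -> 'I_m, measurable_fun setT (fun v => (f \o Defs.proj i) v + (f \o Defs.proj i') v).
  by move=> i i'; exact: (measurable_funD (mi i) (mi i')).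
have Is : forall i i' : 'I_n -> 'I_m, (K m w).-integrable setT
   (EFin \o (fun v => (f \o Defs.proj i) v + (f \o Defs.proj i') v)).
  by move=> i i'; exact: bounded_integrable k1 (bs i i') (ms i i').
have mS := order_set_closed (w : Rn R m).
have mN : measurable (~` Defs.order_set (w : Rn R m)) by exact: measurableC.
have muN : K m w (~` Defs.order_set (w : Rn R m)) = 0%E.
  rewrite -setTD measureD //.
    rewrite setTI; transitivity (1 - 1 : \bar R)%E; last by rewrite subee.
    by congr (_ - _)%E; [exact: prob_kernel | exact: (op m m1 w)].
  by have H : (K m w setT < +oo)%E by rewrite prob_kernel ltry.

have mD : measurable (setT `\` ~` Defs.order_set (w : Rn R m)) by exact: measurableD.
rewrite /Rintegral (negligible_integral mN measurableT (Is i1 i2) muN).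
rewrite (negligible_integral mN measurableT (Is i3 i4) muN).
apply: le_Rintegral => //.
- by apply: integrableS (Is i1 i2) => //.
- by apply: integrableS (Is i3 i4) => //.
move=> v [_ /contrapT Sv] /=.
have cp : forall (i : 'I_n -> 'I_m) j, Defs.coord (Defs.proj i v) j = Defs.coord v (i j).
  by move=> i j; rewrite /Defs.coord mxE.
have P3 : Defs.proj i3 v = vmax (Defs.proj i1 v) (Defs.proj i2 v).
  apply/rowP => j; rewrite /vmax !mxE -/(Defs.coord v (i3 j)) !cp.
  have [h1 h2 h3 h4] := hw j.
  have /orP[hxy|hxy] := le_total (Defs.coord x j) (Defs.coord y j).
  - rewrite (max_idPr hxy) in h3.
    rewrite (max_idPr (Sv _ _ _)); last by rewrite h1 h2.
    by apply/le_anti; rewrite !Sv // h2 h3.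
  - rewrite (max_idPl hxy) in h3.
    rewrite (max_idPl (Sv _ _ _)); last by rewrite h1 h2.
    by apply/le_anti; rewrite !Sv // h1 h3.
have P4 : Defs.proj i4 v = vmin (Defs.proj i1 v) (Defs.proj i2 v).
  apply/rowP => j; rewrite /vmin !mxE -/(Defs.coord v (i4 j)) !cp.
  have [h1 h2 h3 h4] := hw j.
  have /orP[hxy|hxy] := le_total (Defs.coord x j) (Defs.coord y j).
  - rewrite (min_idPl hxy) in h4.
    rewrite (min_idPl (Sv _ _ _)); last by rewrite h1 h2.
    by apply/le_anti; rewrite !Sv // h1 h4.
  - rewrite (min_idPr hxy) in h4.
    rewrite (min_idPr (Sv _ _ _)); last by rewrite h1 h2.
    by apply/le_anti; rewrite !Sv // h2 h4.
by rewrite P3 P4; exact: sf.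
Qed.

End S.

Theorem proposition4p1 (R : realType)
  (K : forall n : nat, R.-pker (Rn R n) ~> (Rn R n)) :
  consistent K ->
  (forall n : nat, (1 <= n)%N -> order_preserving (K n)) ->
  forall n : nat, (2 <= n)%N ->
  forall f : Rn R n -> R,
    bounded_fun_R f -> measurable_fun setT f -> supermodular f ->
    bounded_fun_R (kapply (K n) f) /\
    measurable_fun setT (kapply (K n) f) /\
    supermodular (kapply (K n) f).
Proof.
move=> cK op n n2 f bf mf sf.
have n1 : (1 <= n)%N by exact: ltnW.
split; first exact: kapply_bounded.
split; first exact: kapply_measurable.
exact: kapply_super.
Qed.
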